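(* Let \(E\) be a semilattice with unit and zero. Open subsets of \(\hat E\) correspond bijectively to ideals in \(E\). To an open subset \(A\subseteq\hat E\) corresponds the ideal \(I_A=\{e\in E:U_e\subseteq A\}\). To an ideal \(I\) corresponds the open subset \(A_I=\{\varphi\in\hat E:\varphi(e)=1\text{ for some }e\in I\}=\bigcup_{e\in I}U_e\).
   Context: A semilattice is a commutative semigroup of idempotents with unit \(1\) and zero \(0\), ordered by \(e\le f\iff ef=e\). An ideal in \(E\) is a subset \(I\subseteq E\) containing \(0\) such that \(ef\in I\) whenever \(e\in E\) and \(f\in I\) (equivalently, \(e\in I\) whenever \(f\in I\) and \(e\le f\)). A character on \(E\) is a map \(\varphi\colon E\to\{0,1\}\) with \(\varphi(0)=0\), \(\varphi(1)=1\), \(\varphi(ef)=\varphi(e)\varphi(f)\). \(\hat E\) is the set of characters, \(U_e=\{\varphi:\varphi(e)=1\}\), and \(\hat E\) carries the topology generated by the sets \(U_e\). *)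

(* Defs.v *)
Record semilattice := Semilattice {
  sl_car :> Type;
  sl_mul : sl_car -> sl_car -> sl_car;
  sl_one : sl_car;
  sl_zero : sl_car;
  sl_mulA : forall e f g, sl_mul e (sl_mul f g) = sl_mul (sl_mul e f) g;
  sl_mulC : forall e f, sl_mul e f = sl_mul f e;
  sl_mulI : forall e, sl_mul e e = e;
  sl_mul1 : forall e, sl_mul sl_one e = e;
  sl_mul0 : forall e, sl_mul sl_zero e = sl_zero
}.

Section Defs.
Variable E : semilattice.

Definition sl_le (e f : E) : Prop := sl_mul E e f = e.

Definition is_ideal (I : E -> Prop) : Prop :=
  I (sl_zero E) /\ (forall e f : E, I f -> I (sl_mul E e f)).

(* Characters E -> {0,1}; we use bool with false = 0, true = 1. *)
Definition is_character (phi : E -> bool) : Prop :=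
  phi (sl_zero E) = false /\ phi (sl_one E) = true /\
  (forall e f : E, phi (sl_mul E e f) = andb (phi e) (phi f)).

Definition character := { phi : E -> bool | is_character phi }.

Definition chi (phi : character) : E -> bool := proj1_sig phi.

Definition U (e : E) : character -> Prop := fun phi => chi phi e = true.

(* The topology on \hat E generated by the sets U_e: the smallest family
   of subsets containing every U_e, the whole space, and closed under
   binary intersections and arbitrary unions. *)
Inductive gen_open : (character -> Prop) -> Prop :=
  | go_basic : forall e, gen_open (U e)
  | go_full : gen_open (fun _ => True)
  | go_inter : forall A B, gen_open A -> gen_open B ->
      gen_open (fun phi => A phi /\ B phi)
  | go_union : forall (J : Type) (F : J -> character -> Prop),
      (forall j, gen_open (F j)) -> gen_open (fun phi => exists j, F j phi)
  | go_ext : forall A B, gen_open A -> (forall phi, A phi <-> B phi) ->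
      gen_open B.

Definition ideal_of (A : character -> Prop) : E -> Prop :=
  fun e => forall phi, U e phi -> A phi.

Definition open_of (I : E -> Prop) : character -> Prop :=
  fun phi => exists e, I e /\ chi phi e = true.

End Defs.
Arguments ideal_of {E} A _.
Arguments open_of {E} I _.
Arguments U {E} e _.
Arguments chi {E} phi _.
Arguments is_ideal {E} I.
Arguments gen_open {E} _.

(* Main.v *)
Require Import Defs.
From Stdlib Require Import Classical ClassicalEpsilon.

Lemma mul_le_split (E : semilattice) (e f g : E) :
  sl_mul E e (sl_mul E f g) = e -> sl_mul E e f = e.
Proof.
  intro H.
  rewrite <- H at 1.
  rewrite <- (sl_mulA E e (sl_mul E f g) f).
  rewrite (sl_mulC E (sl_mul E f g) f).
  rewrite (sl_mulA E f f g), (sl_mulI E f). exact H.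
Qed.

Definition upchar (E : semilattice) (e : E) (f : E) : bool :=
  if excluded_middle_informative (sl_mul E e f = e) then true else false.

Lemma upchar_true (E : semilattice) (e f : E) :
  upchar E e f = true <-> sl_mul E e f = e.
Proof.
  unfold upchar; destruct excluded_middle_informative; split; congruence.
Qed.

Lemma upchar_char (E : semilattice) (e : E) :
  e <> sl_zero E -> is_character E (upchar E e).
Proof.
  intro Hne. split; [|split].
  - destruct (upchar E e (sl_zero E)) eqn:H; auto.
    apply upchar_true in H. rewrite sl_mulC, sl_mul0 in H. congruence.
  - apply upchar_true. rewrite sl_mulC. apply sl_mul1.
  - intros f g.
    destruct (upchar E e (sl_mul E f g)) eqn:H.
    + apply upchar_true in H.
      assert (H1 := mul_le_split E e f g H).
      rewrite (sl_mulC E f g) in H.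
      assert (H2 := mul_le_split E e g f H).
      apply upchar_true in H1. apply upchar_true in H2. rewrite H1, H2; auto.
    + destruct (upchar E e f) eqn:H1; destruct (upchar E e g) eqn:H2; auto.
      apply upchar_true in H1. apply upchar_true in H2.
      exfalso. assert (upchar E e (sl_mul E f g) = true); [|congruence].
      apply upchar_true. rewrite sl_mulA, H1. exact H2.
Qed.

Theorem lemma2p14 (E : semilattice) :
  (forall A : character E -> Prop, gen_open A -> is_ideal (ideal_of A)) /\
  (forall I : E -> Prop, is_ideal I -> gen_open (open_of I)) /\
  (forall I : E -> Prop, is_ideal I ->
     forall e : E, ideal_of (open_of I) e <-> I e) /\
  (forall A : character E -> Prop, gen_open A ->
     forall phi : character E, open_of (ideal_of A) phi <-> A phi) /\
  (forall I : E -> Prop, forall phi : character E,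
     open_of I phi <-> (exists e, I e /\ U e phi)).
Proof.
  split; [|split; [|split; [|split]]].
  - intros A _. split.
    + intros phi Hu. exfalso. destruct phi as [p [H0 Hrest]]. unfold U, chi in Hu. simpl in Hu. congruence.
    + intros e f Hf phi Hu. apply Hf.
      assert (Hm : chi phi (sl_mul E e f) = andb (chi phi e) (chi phi f)) by (destruct phi as [p [Hz0 [Hz1 Hm]]]; apply Hm).
      unfold U in *. rewrite Hm in Hu. destruct (chi phi e), (chi phi f); simpl in *; congruence.
  - intros I _.
    apply (go_ext E (fun phi => exists j : {e | I e}, U (proj1_sig j) phi)).
    + apply go_union. intros j. apply go_basic.
    + intros phi; split.
      * intros [[e He] Hu]. exists e. split; auto.
      * intros [e [He Hu]]. exists (exist _ e He). exact Hu.
  - intros I [HI0 HIm] e. split.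
    + intros H. destruct (classic (e = sl_zero E)) as [Hz|Hz].
      * subst. exact HI0.
      * set (phi := exist _ (upchar E e) (upchar_char E e Hz) : character E).
        assert (Hu : U e phi).
        { unfold U, chi, phi; simpl. apply upchar_true. apply sl_mulI. }
        destruct (H phi Hu) as [f [Hf Hc]].
        unfold chi, phi in Hc; simpl in Hc. apply upchar_true in Hc.
        rewrite <- Hc. apply HIm. exact Hf.
    + intros He phi Hu. exists e. split; auto.
  - intros A HA phi. split.
    + intros [e [He Hc]]. apply He. exact Hc.
    + revert phi. induction HA.
      * intros phi Hphi. exists e. split; auto. intros psi Hp; exact Hp.
      * intros phi _. exists (sl_one E). split; [intros ? ?; exact Logic.I|].
        destruct phi as [p [Hz0 [H1 Hz2]]]. exact H1.
      * intros phi [Ha Hb].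
        destruct (IHHA1 phi Ha) as [e1 [He1 Hc1]].
        destruct (IHHA2 phi Hb) as [e2 [He2 Hc2]].
        exists (sl_mul E e1 e2).
        assert (Hmul : forall psi : character E,
                  chi psi (sl_mul E e1 e2) = andb (chi psi e1) (chi psi e2)).
        { intros [p [Hz0 [Hz1 Hm]]]. apply Hm. }
        split.
        -- intros psi Hu. unfold U in Hu. rewrite Hmul in Hu.
           destruct (chi psi e1) eqn:X, (chi psi e2) eqn:Y; simpl in Hu; try congruence.
           split; [apply He1 | apply He2]; exact X || exact Y.
        -- rewrite Hmul, Hc1, Hc2. reflexivity.
      * intros phi [j Hj]. destruct (H0 j phi Hj) as [e [He Hc]].
        exists e. split; auto. intros psi Hp. exists j. apply He. exact Hp.
      * rename H into Hiff. intros phi Hb. apply Hiff in Hb. destruct (IHHA phi Hb) as [e [He Hc]].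
        exists e. split; auto. intros psi Hp. apply Hiff. apply He. exact Hp.
  - intros I phi. unfold open_of, U. tauto.
Qed.
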